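(* Let $N\ge 1$. Make the following two assumptions. (Exchangeability.) For every permutation $\sigma$ of $\{1,\dots,N\}$, the family $$\big((\bar a_{l-1})_{b,\sigma(m)}\big)_{l,b,m}\ \text{together with}\ \big(D^{(\sigma(n))}_{l,l'}(a,\sigma(m);c,\sigma(m'))\big)_{l,l',a,c,n,m,m'}$$ has the same joint distribution as the unpermuted family $\big((\bar a_{l-1})_{b,m}\big)$, $\big(D^{(n)}_{l,l'}(a,m;c,m')\big)$. (Factorization.) For all $l,l',a,b,c,d$ and all permutations $\pi,\pi'$ of $\{1,\dots,N\}$, $$\mathbb{E}\Big[\mathbb{E}_n\big[(\bar a_{l-1})_{b,\pi(n)}(\bar a_{l'-1})_{d,\pi'(n)}\,D^{(n)}_{l,l'}(a,\pi(n);c,\pi'(n))\big]\Big]=\mathbb{E}\Big[\mathbb{E}_n\big[(\bar a_{l-1})_{b,\pi(n)}(\bar a_{l'-1})_{d,\pi'(n)}\big]\Big]\cdot\mathbb{E}\Big[\mathbb{E}_n\big[D^{(n)}_{l,l'}(a,\pi(n);c,\pi'(n))\big]\Big].$$ Under these assumptions, $$H=\bar A*\mathcal{H}'+\frac{1}{\max(N-1,1)}\big(N\bar A'-\bar A\big)*(\mathcal{H}''-\mathcal{H}').$$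
   Context: Setting. Fix layer widths $C_0,\dots,C_L$ and a mini-batch size $N$. For $l=1,\dots,L$, let $\bar a_{l-1}\in\mathbb{R}^{(C_{l-1}+1)\times N}$ be random matrices; these are the activations of layer $l-1$ with a row of ones appended. For $n,m,m'\in\{1,\dots,N\}$, $l,l'\in\{1,\dots,L\}$, $a\in\{1,\dots,C_l\}$ and $c\in\{1,\dots,C_{l'}\}$, let $D^{(n)}_{l,l'}(a,m;c,m')$ be real random variables; these stand for the second derivatives $\partial^2\mathcal{L}_n/\partial(h_l)_{a,m}\partial(h_{l'})_{c,m'}$ of the $n$-th example's loss with respect to pre-activations. All these random variables are defined on a common probability space (the random sampling of a mini-batch with its labels). $\mathbb{E}$ denotes expectation over that randomness. $\mathbb{E}_n[\cdot]=\frac1N\sum_{n=1}^N[\cdot]$ is the average over the example index. All expectations appearing are assumed finite. Block matrices. Define block matrices whose $(l,l')$ blocks are as follows, with $\{M\}_{l,l'}$ denoting block $(l,l')$: - $(\{\bar A\}_{l,l'})_{b,d}=\mathbb{E}\big[\mathbb{E}_n[(\bar a_{l-1})_{b,n}(\bar a_{l'-1})_{d,n}]\big]$; - $(\{\bar A'\}_{l,l'})_{b,d}=\mathbb{E}\big[\mathbb{E}_n[(\bar a_{l-1})_{b,n}]\,\mathbb{E}_n[(\bar a_{l'-1})_{d,n}]\big]$; - $(\{\mathcal{H}'\}_{l,l'})_{a,c}=\mathbb{E}\big[\mathbb{E}_n[\sum_{m}D^{(n)}_{l,l'}(a,m;c,m)]\big]$; - $(\{\mathcal{H}''\}_{l,l'})_{a,c}=\mathbb{E}\big[\mathbb{E}_n[\sum_{m,m'}D^{(n)}_{l,l'}(a,m;c,m')]\big]$.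 So $\{\bar A\}_{l,l'}$ and $\{\bar A'\}_{l,l'}$ are $(C_{l-1}+1)\times(C_{l'-1}+1)$, and $\{\mathcal{H}'\}_{l,l'}$ and $\{\mathcal{H}''\}_{l,l'}$ are $C_l\times C_{l'}$. Let $H$ be the block matrix whose block $(l,l')$ has size $C_l(C_{l-1}+1)\times C_{l'}(C_{l'-1}+1)$. Its entry in row $(b-1)C_l+a$ and column $(d-1)C_{l'}+c$ is $$\mathbb{E}\Big[\mathbb{E}_n\Big[\sum_{m,m'}(\bar a_{l-1})_{b,m}(\bar a_{l'-1})_{d,m'}D^{(n)}_{l,l'}(a,m;c,m')\Big]\Big].$$ This is the expected Hessian of the averaged loss with respect to the column-major vectorized weights $\mathrm{vec}(W_l)$. Khatri–Rao product. For two block matrices $P,Q$ with the same block layout, $P*Q$ is the block matrix with blocks $\{P*Q\}_{l,l'}=\{P\}_{l,l'}\otimes\{Q\}_{l,l'}$, where $\otimes$ is the Kronecker product. *)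

(* Defs.v *)
From HB Require Import structures.
From mathcomp Require Import all_boot all_order all_algebra all_fingroup.
From mathcomp Require Import all_classical all_reals all_analysis.
Set Implicit Arguments. Unset Strict Implicit. Unset Printing Implicit Defensive.
Import Order.TTheory GRing.Theory Num.Theory.
Local Open Scope classical_set_scope.
Local Open Scope ring_scope.

(* Conventions (0-based indices):
   - layers l : 'I_L stand for the paper's layers 1..L (paper layer = l+1);
   - C : nat -> nat, C k = paper's C_k; so paper's C_{l-1} is [C l] and
     paper's C_l is [C l.+1];
   - abar l b m w  = (abar_{l-1})_{b,m}  (paper layer l+1), b : 'I_(C l).+1;
   - D l l' n a m c m' w = D^{(n)}_{l,l'}(a,m;c,m'). *)

Section Defs.
Variables (R : realType) (d : measure_display) (T : measurableType d).
Variables (L : nat) (C : nat -> nat) (N : nat).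

Definition act_family := forall l : 'I_L, 'I_(C l).+1 -> 'I_N -> T -> R.
Definition hess_family := forall l l' : 'I_L,
  'I_N -> 'I_(C l.+1) -> 'I_N -> 'I_(C l'.+1) -> 'I_N -> T -> R.

(* expectation (a real number; finiteness is ensured by integrability
   hypotheses in the theorem) *)
Definition Ex (P : probability T R) (X : T -> R) : R := fine ('E_P[X])%E.

Definition avgN (f : 'I_N -> R) : R := N%:R^-1 * \sum_(n < N) f n.

(* Exchangeability: equality of the joint distributions of the (finite)
   permuted and unpermuted families, i.e. equality of the probabilities of
   all measurable rectangles (which determine the joint law). *)
Definition exchangeable (P : probability T R) (abar : act_family)
  (D : hess_family) : Prop :=
  forall (s : 'S_N)
    (Ba : forall l : 'I_L, 'I_(C l).+1 -> 'I_N -> set R)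
    (BD : forall l l' : 'I_L,
       'I_N -> 'I_(C l.+1) -> 'I_N -> 'I_(C l'.+1) -> 'I_N -> set R),
    (forall l b m, measurable (Ba l b m)) ->
    (forall l l' n a m c m', measurable (BD l l' n a m c m')) ->
    P [set w | (forall l b m, Ba l b m (abar l b (s m) w)) /\
               (forall l l' n a m c m',
                  BD l l' n a m c m' (D l l' (s n) a (s m) c (s m') w))]
    = P [set w | (forall l b m, Ba l b m (abar l b m w)) /\
                 (forall l l' n a m c m',
                    BD l l' n a m c m' (D l l' n a m c m' w))].

Definition factorizes (P : probability T R) (abar : act_family)
  (D : hess_family) : Prop :=
  forall (l l' : 'I_L) (b : 'I_(C l).+1) (dd : 'I_(C l').+1)
    (a : 'I_(C l.+1)) (c : 'I_(C l'.+1)) (pi pi' : 'S_N),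
  Ex P (fun w => avgN (fun n =>
          abar l b (pi n) w * abar l' dd (pi' n) w
          * D l l' n a (pi n) c (pi' n) w))
  = Ex P (fun w => avgN (fun n => abar l b (pi n) w * abar l' dd (pi' n) w))
    * Ex P (fun w => avgN (fun n => D l l' n a (pi n) c (pi' n) w)).

Definition Abar_blk (P : probability T R) (abar : act_family) (l l' : 'I_L)
  : 'M[R]_((C l).+1, (C l').+1) :=
  \matrix_(b, dd) Ex P (fun w => avgN (fun n => abar l b n w * abar l' dd n w)).

Definition Abar'_blk (P : probability T R) (abar : act_family) (l l' : 'I_L)
  : 'M[R]_((C l).+1, (C l').+1) :=
  \matrix_(b, dd) Ex P (fun w => avgN (fun n => abar l b n w)
                                 * avgN (fun n => abar l' dd n w)).

Definition H'_blk (P : probability T R) (D : hess_family) (l l' : 'I_L)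
  : 'M[R]_(C l.+1, C l'.+1) :=
  \matrix_(a, c) Ex P (fun w => avgN (fun n =>
                         \sum_(m < N) D l l' n a m c m w)).

Definition H''_blk (P : probability T R) (D : hess_family) (l l' : 'I_L)
  : 'M[R]_(C l.+1, C l'.+1) :=
  \matrix_(a, c) Ex P (fun w => avgN (fun n =>
                         \sum_(m < N) \sum_(m' < N) D l l' n a m c m' w)).

End Defs.

(* Splitting an index k : 'I_(p*q) into (i,j) with k = i*q + j
   (inverse of mathcomp's mxvec_index). *)
Definition vsplit (p q : nat) (k : 'I_(p * q)) : 'I_p * 'I_q :=
  enum_val (cast_ord (esym (mxvec_cast p q)) k).

(* Kronecker product: entry (i1*m2+i2, j1*n2+j2) is A i1 j1 * B i2 j2 *)
Definition kron (R : pzRingType) (m1 n1 m2 n2 : nat)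
  (A : 'M[R]_(m1, n1)) (B : 'M[R]_(m2, n2)) : 'M[R]_(m1 * m2, n1 * n2) :=
  \matrix_(i, j) (A (vsplit i).1 (vsplit j).1 * B (vsplit i).2 (vsplit j).2).

Lemma vsplit_mxvec_index (p q : nat) (i : 'I_p) (j : 'I_q) :
  vsplit (mxvec_index i j) = (i, j).
Proof. by rewrite /vsplit /mxvec_index cast_ordK enum_rankK. Qed.



(* Block (l,l') of the expected Hessian H, rows indexed by (b,a) with
   paper row (b-1)C_l + a, columns by (d,c). *)
Definition H_blk (R : realType) (d : measure_display) (T : measurableType d)
  (L : nat) (C : nat -> nat) (N : nat) (P : probability T R)
  (abar : act_family R T L C N) (D : hess_family R T L C N) (l l' : 'I_L)
  : 'M[R]_((C l).+1 * C l.+1, (C l').+1 * C l'.+1) :=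
  \matrix_(i, j)
    let: (b, a) := vsplit i in let: (dd, c) := vsplit j in
    Ex P (fun w => avgN (fun n =>
       \sum_(m < N) \sum_(m' < N)
          abar l b m w * abar l' dd m' w * D l l' n a m c m' w)).

(* Main.v *)
Require Import Defs.
From HB Require Import structures.
From mathcomp Require Import all_boot all_order all_algebra all_fingroup.
From mathcomp Require Import all_classical all_reals all_analysis.
From mathcomp Require Import measurable_realfun zify ring lra.
Import Order.TTheory GRing.Theory Num.Theory.
Local Open Scope classical_set_scope.
Local Open Scope ring_scope.
Set Implicit Arguments. Unset Strict Implicit.

Section law2.
Context (R : realType) (d : measure_display) (T : measurableType d)
  (P : probability T R) (X1 Y1 X2 Y2 : T -> R).
Hypotheses (mX1 : measurable_fun setT X1) (mY1 : measurable_fun setT Y1)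
  (mX2 : measurable_fun setT X2) (mY2 : measurable_fun setT Y2).
Hypothesis law : forall A B : set R, measurable A -> measurable B ->
  P [set w | A (X1 w) /\ B (Y1 w)] = P [set w | A (X2 w) /\ B (Y2 w)].
Hypotheses (i1 : P.-integrable setT (EFin \o (fun w => X1 w * Y1 w)))
  (i2 : P.-integrable setT (EFin \o (fun w => X2 w * Y2 w))).

Let phi1 := fun w => (X1 w, Y1 w).
Let phi2 := fun w => (X2 w, Y2 w).
Let mphi1 : measurable_fun setT phi1.
Proof. exact: measurable_fun_pair. Qed.
Let mphi2 : measurable_fun setT phi2.
Proof. exact: measurable_fun_pair. Qed.
Let f := fun y : R * R => (y.1 * y.2)%:E.
Let mf : measurable_fun setT f.
Proof. apply: measurableT_comp => //; apply: measurable_funM => //. Qed.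

Let pf1 := pushforward P phi1.
Let pf2 := pushforward P phi2.

Let eqpf A : measurable A -> pf1 A = pf2 A.
Proof.
move=> mA.
apply: (measure_unique [set A `*` B | A in measurable & B in measurable] (fun _ => setT)) => //.
- exact: measurable_prod_measurableType.
- move=> _ _ [A1 mA1 [B1 mB1 <-]] [A2 mA2 [B2 mB2 <-]].
  rewrite -setXI; exists (A1 `&` A2); first exact: measurableI.
  by exists (B1 `&` B2) => //; exact: measurableI.
- by move=> _; exists setT => //; exists setT => //; rewrite setXTT.
- by rewrite bigcup_const.
- move=> _ [A1 mA1 [B1 mB1 <-]]; exact: law.
- by move=> _ /=; rewrite /pushforward preimage_setT probability_setT ltry.
Qed.

Lemma law2E : ('E_P[fun w => (X1 w * Y1 w)%R] = 'E_P[fun w => (X2 w * Y2 w)%R])%E.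
Proof.
rewrite unlock.
have j1 : P.-integrable (phi1 @^-1` setT) (f \o phi1) by rewrite preimage_setT.
have j2 : P.-integrable (phi2 @^-1` setT) (f \o phi2) by rewrite preimage_setT.
have h1 := @integral_pushforward _ _ _ _ R phi1 mphi1 P setT f mf j1 measurableT.
have h2 := @integral_pushforward _ _ _ _ R phi2 mphi2 P setT f mf j2 measurableT.
rewrite preimage_setT in h1 h2.
rewrite -[LHS]/(\int[P]_(x in setT) (f \o phi1) x)%E -h1.
rewrite -[RHS]/(\int[P]_(x in setT) (f \o phi2) x)%E -h2.
apply: eq_measure_integral => A mA _. exact (eqpf mA).
Qed.
End law2.

Section ExLemmas.
Context (R : realType) (d : measure_display) (T : measurableType d)
  (P : probability T R).

Lemma ExE (X : T -> R) : X \in Lfun P 1 -> ('E_P[X] = (Ex P X)%:E)%E.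
Proof. by move=> hX; rewrite /Ex fineK// expectation_fin_num. Qed.

Lemma Lfun_sum (I : Type) (r : seq I) (F : I -> T -> R) :
  (forall i, F i \in Lfun P 1) -> (fun w => \sum_(i <- r) F i w) \in Lfun P 1.
Proof. by move=> hF; rewrite -fct_sumE; apply: rpred_sum => i _. Qed.

Lemma scaleE (k : R) (X : T -> R) : (fun w => k * X w) = k \o* X.
Proof. by apply/funext => w /=; rewrite mulrC. Qed.

Lemma Lfun_scale1 (k : R) (X : T -> R) : X \in Lfun P 1 ->
  (fun w => k * X w) \in Lfun P 1.
Proof. move=> hX; rewrite scaleE; exact: (@Lfun_scale _ _ _ P X k 1 (lexx _) hX). Qed.

Lemma Ex_sum (I : Type) (r : seq I) (F : I -> T -> R) :
  (forall i, F i \in Lfun P 1) ->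
  Ex P (fun w => \sum_(i <- r) F i w) = \sum_(i <- r) Ex P (F i).
Proof.
move=> hF; elim: r => [|i r IH].
  rewrite big_nil.
  under eq_fun do rewrite big_nil.
  by rewrite /Ex expectation_cst.
rewrite big_cons -IH.
under eq_fun do rewrite big_cons.
apply: EFin_inj.
rewrite -ExE; last by apply: rpredD => //; exact: Lfun_sum.
rewrite (expectationD (hF i) (@Lfun_sum _ r _ hF)) (ExE (hF i)) (ExE (@Lfun_sum _ r _ hF)).
by [].
Qed.

Lemma Ex_scale (k : R) (X : T -> R) : X \in Lfun P 1 ->
  Ex P (fun w => k * X w) = k * Ex P X.
Proof.
move=> hX; apply: EFin_inj; rewrite -ExE; last exact: Lfun_scale1.
by rewrite scaleE (expectationZl k hX) ExE.
Qed.

Lemma Ex_avg (N : nat) (F : 'I_N -> T -> R) :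
  (forall i, F i \in Lfun P 1) ->
  Ex P (fun w => avgN (fun n => F n w)) = N%:R^-1 * \sum_(n < N) Ex P (F n).
Proof.
move=> hF; rewrite /avgN Ex_scale; last exact: Lfun_sum.
by rewrite Ex_sum.
Qed.

End ExLemmas.

Section Alg.
Variables (R : realFieldType) (N : nat) (N0 : (0 < N)%N).

Definition sh (k n : 'I_N) : 'I_N := Ordinal (ltn_pmod (n + k) N0).

Lemma sh_inj_n k : injective (fun n => sh k n).
Proof.
move=> n1 n2 /(congr1 val) /= /eqP; rewrite eqn_modDr !modn_small // => /eqP h.
exact: val_inj.
Qed.

Lemma sh_inj_k n : injective (fun k => sh k n).
Proof.
move=> n1 n2 /(congr1 val) /= /eqP; rewrite eqn_modDl !modn_small // => /eqP h.
exact: val_inj.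
Qed.

Definition pk k : 'S_N := perm (@sh_inj_n k).
Lemma pkE k n : pk k n = sh k n. Proof. by rewrite permE. Qed.

Lemma pk_inj_k n : injective (fun k => pk k n).
Proof. by move=> k1 k2 /=; rewrite !pkE; exact: (@sh_inj_k n k1 k2). Qed.

Lemma pk_neq k k' n : k != k' -> pk k n != pk k' n.
Proof. by move=> kk'; apply: contra_neq kk'; exact: (@pk_inj_k n k k'). Qed.

Lemma double_reindex (G : 'I_N -> 'I_N -> R) n :
  \sum_m \sum_m' G m m' = \sum_k \sum_k' G (pk k n) (pk k' n).
Proof.
rewrite (reindex_inj (@pk_inj_k n)); apply: eq_bigr => k _.
by rewrite (reindex_inj (@pk_inj_k n)).
Qed.

Variables (g f : 'I_N -> 'I_N -> 'I_N -> R) (e : 'I_N -> 'I_N -> R).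
Hypothesis fact : forall pi pi' : 'S_N,
  N%:R^-1 * \sum_n g n (pi n) (pi' n)
  = (N%:R^-1 * \sum_n e (pi n) (pi' n)) * (N%:R^-1 * \sum_n f n (pi n) (pi' n)).
Hypothesis exch : forall (s : 'S_N) m m', e (s m) (s m') = e m m'.

Lemma offdiag m m' p p' : m != m' -> p != p' -> e m m' = e p p'.
Proof.
move=> mm' pp'.
have qp : tperm m p m' != p.
  by rewrite -{2}(tpermL m p) (inj_eq (@perm_inj _ (tperm m p))) eq_sym.
pose s := (tperm m p * tperm (tperm m p m') p')%g.
have sm : s m = p.
  by rewrite permM tpermL tpermD // eq_sym.
have sm' : s m' = p'.
  by rewrite permM tpermL.
by rewrite -(exch s m m') sm sm'.
Qed.

Let Nz : N%:R != 0 :> R. Proof. by rewrite pnatr_eq0 -lt0n. Qed.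

Let c := (maxn (N - 1) 1)%:R^-1 : R.
Let Ab := N%:R^-1 * \sum_n e n n.
Let Ab' := N%:R^-1 * \sum_m (N%:R^-1 * \sum_m' e m m').
Let H1 := N%:R^-1 * \sum_n \sum_m f n m m.
Let H2 := N%:R^-1 * \sum_n \sum_m \sum_m' f n m m'.
Let E k k' := N%:R^-1 * \sum_n e (pk k n) (pk k' n).
Let F k k' := N%:R^-1 * \sum_n f n (pk k n) (pk k' n).

Let sum_const (x : R) : \sum_(i < N) x = N%:R * x.
Proof. by rewrite sumr_const card_ord mulr_natl. Qed.

Let sum_neq (h : 'I_N -> R) m : \sum_(i | i != m) h i = \sum_i h i - h m.
Proof. by rewrite [in RHS](bigD1 m) //= addrC addrK. Qed.

Let Ekk k : E k k = Ab.
Proof.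
rewrite /E /Ab; congr (_ * _).
by rewrite [RHS](reindex_inj (@perm_inj _ (pk k))).
Qed.

Let Ekk' k k' : k != k' -> E k k' = c * (N%:R * Ab' - Ab).
Proof.
move=> kk'.
have N2 : (1 < N)%N.
  have h1 := ltn_ord k; have h2 := ltn_ord k'.
  have : (k : nat) <> (k' : nat) by move=> /val_inj /eqP; rewrite (negbTE kk').
  lia.
have -> : E k k' = e k k'.
  rewrite /E (eq_bigr (fun _ => e k k')); last first.
    by move=> n _; apply: offdiag => //; exact: pk_neq.
  by rewrite sum_const mulrA mulVf // mul1r.
have hrow m : \sum_m' e m m' = e m m + (N%:R - 1) * e k k'.
  rewrite (bigD1 m) //=; congr (_ + _).
  rewrite (eq_bigr (fun _ => e k k')); last first.
    by move=> m' hm'; apply: offdiag => //; rewrite eq_sym.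
  by rewrite sum_neq sum_const mulrBl mul1r.
have hAb' : Ab' = N%:R^-1 * (N%:R^-1 * \sum_m e m m) + N%:R^-1 * (N%:R - 1) * e k k'.
  rewrite /Ab'; under eq_bigr do rewrite hrow mulrDr.
  rewrite big_split /= -mulr_sumr sum_const; field.
  done.
have hc : c = (N%:R - 1)^-1.
  rewrite /c; have -> : maxn (N - 1) 1 = (N - 1)%N by apply/maxn_idPl; lia.
  by rewrite natrB ?(ltnW N2).
have N1 : (N%:R - 1 : R) != 0.
  rewrite subr_eq0 pnatr_eq1; lia.
rewrite hc hAb' /Ab; field.
by rewrite N1 Nz.
Qed.

Lemma alg_main :
  N%:R^-1 * \sum_n \sum_m \sum_m' g n m m'
  = Ab * H1 + c * ((N%:R * Ab' - Ab) * (H2 - H1)).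
Proof.
have step1 : \sum_n \sum_m \sum_m' g n m m'
    = \sum_k \sum_k' \sum_n g n (pk k n) (pk k' n).
  under eq_bigr => n _ do rewrite (double_reindex (g n) n).
  rewrite exchange_big; apply: eq_bigr => k _; exact: exchange_big.
have hH1 : H1 = \sum_k F k k.
  rewrite /H1 /F -mulr_sumr; congr (_ * _).
  under eq_bigr => n _ do rewrite (reindex_inj (@pk_inj_k n)).
  by rewrite exchange_big.
have hH2 : H2 = \sum_k \sum_k' F k k'.
  rewrite /H2 /F; under [in RHS]eq_bigr do rewrite -mulr_sumr.
  rewrite -mulr_sumr; congr (_ * _).
  under eq_bigr => n _ do rewrite (double_reindex (f n) n).
  rewrite exchange_big; apply: eq_bigr => k _; exact: exchange_big.
have LHS : N%:R^-1 * \sum_n \sum_m \sum_m' g n m m'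
    = \sum_k \sum_k' E k k' * F k k'.
  rewrite step1 mulr_sumr; apply: eq_bigr => k _.
  rewrite mulr_sumr; apply: eq_bigr => k' _.
  exact: fact.
rewrite LHS hH1 hH2.
set beta := c * (N%:R * Ab' - Ab).
have -> : \sum_k \sum_k' E k k' * F k k'
    = \sum_k (Ab * F k k + beta * (\sum_k' F k k' - F k k)).
  apply: eq_bigr => k _.
  rewrite (bigD1 k) //= Ekk; congr (_ + _).
  rewrite -sum_neq mulr_sumr; apply: eq_bigr => k' hk'.
  by rewrite Ekk' // eq_sym.
rewrite big_split /= -mulr_sumr -[X in _ + X = _]mulr_sumr sumrB /beta -mulrA.
by congr (_ + _ * (_ * (_ - _))).
Qed.

End Alg.


Unset Implicit Arguments.
Section Exch.
Context (R : realType) (d : measure_display) (T : measurableType d)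
  (P : probability T R) (L : nat) (C : nat -> nat) (N : nat)
  (abar : act_family R T L C N) (D : hess_family R T L C N).
Hypothesis ma : forall (l : 'I_L) (b : 'I_(C l).+1) (m : 'I_N), measurable_fun setT (abar l b m).
Hypothesis iaa : forall (l l' : 'I_L) (b : 'I_(C l).+1) (dd : 'I_(C l').+1) (m m' : 'I_N),
     P.-integrable setT (EFin \o (fun w => abar l b m w * abar l' dd m' w)).
Hypothesis hex : exchangeable P abar D.

Section sets.
Variables (l l' : 'I_L) (b : 'I_(C l).+1) (dd : 'I_(C l').+1) (m m' : 'I_N)
  (A B : set R).
Let Ba (l0 : 'I_L) (b0 : 'I_(C l0).+1) (m0 : 'I_N) : set R :=
  (if [&& l0 == l, (b0 : nat) == b & m0 == m] then A else setT) `&`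
  (if [&& l0 == l', (b0 : nat) == dd & m0 == m'] then B else setT).
Let BD (l0 l0' : 'I_L) (n : 'I_N) (a0 : 'I_(C l0.+1)) (m0 : 'I_N)
  (c0 : 'I_(C l0'.+1)) (m0' : 'I_N) : set R := setT.

Let setE (h hn : 'I_N -> 'I_N) :
  [set w | (forall l0 b0 m0, Ba l0 b0 m0 (abar l0 b0 (h m0) w)) /\
           (forall l0 l0' n a0 m0 c0 m0',
              BD l0 l0' n a0 m0 c0 m0' (D l0 l0' (hn n) a0 (h m0) c0 (h m0') w))]
  = [set w | A (abar l b (h m) w) /\ B (abar l' dd (h m') w)].
Proof.
apply/seteqP; split => w /=.
  move=> [hb _]; split.
    by have [+ _] := hb l b m; rewrite !eqxx.
  by have [_] := hb l' dd m'; rewrite !eqxx.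
move=> [hA hB]; split => // l0 b0 m0; split.
  case: ifP => // /and3P[/eqP el /eqP eb /eqP em]; subst l0 m0.
  by rewrite (_ : b0 = b) //; exact: val_inj.
case: ifP => // /and3P[/eqP el /eqP eb /eqP em]; subst l0 m0.
by rewrite (_ : b0 = dd) //; exact: val_inj.
Qed.

Lemma law_exch (s : 'S_N) : measurable A -> measurable B ->
  P [set w | A (abar l b (s m) w) /\ B (abar l' dd (s m') w)]
  = P [set w | A (abar l b m w) /\ B (abar l' dd m' w)].
Proof.
move=> mA mB.
have mBa l0 b0 m0 : measurable (Ba l0 b0 m0).
  by apply: measurableI; case: ifP.
have mBD l0 l0' n a0 m0 c0 m0' : measurable (BD l0 l0' n a0 m0 c0 m0').
  exact: measurableT.
have h := hex s Ba BD mBa mBD.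
transitivity (P [set w | (forall l0 b0 m0, Ba l0 b0 m0 (abar l0 b0 (s m0) w)) /\
           (forall l0 l0' n a0 m0 c0 m0',
              BD l0 l0' n a0 m0 c0 m0' (D l0 l0' (s n) a0 (s m0) c0 (s m0') w))]).
  by congr (P _); exact/esym/(setE s s).
rewrite h; congr (P _); exact: (setE id id).
Qed.
End sets.

Lemma exch_e l l' b dd m m' (s : 'S_N) :
  Ex P (fun w => abar l b (s m) w * abar l' dd (s m') w)
  = Ex P (fun w => abar l b m w * abar l' dd m' w).
Proof.
rewrite /Ex; congr fine; apply: law2E => //.
by move=> A B mA mB; exact: law_exch.
Qed.
End Exch.

Lemma avgN_mul (R : realType) (N : nat) (x y : 'I_N -> R) :
  avgN x * avgN y = avgN (fun m => avgN (fun m' => x m * y m')).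
Proof.
rewrite /avgN.
have -> : \sum_(m < N) N%:R^-1 * \sum_(m' < N) x m * y m'
    = N%:R^-1 * ((\sum_(m < N) x m) * \sum_(m' < N) y m').
  rewrite [in RHS]mulr_suml [RHS]mulr_sumr; apply: eq_bigr => m _; by rewrite [x m * _]mulr_sumr.
ring.
Qed.

Theorem theorem2 (R : realType) (d : measure_display) (T : measurableType d)
  (P : probability T R) (L : nat) (C : nat -> nat) (N : nat)
  (abar : act_family R T L C N) (D : hess_family R T L C N) :
  (0 < N)%N ->
  (forall l b m, measurable_fun setT (abar l b m)) ->
  (forall l l' n a m c m', measurable_fun setT (D l l' n a m c m')) ->
  (forall l l' b dd m m',
     P.-integrable setT (EFin \o (fun w => abar l b m w * abar l' dd m' w))) ->
  (forall l l' n a m c m', P.-integrable setT (EFin \o D l l' n a m c m')) ->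
  (forall l l' b dd n a m c m',
     P.-integrable setT
       (EFin \o (fun w => abar l b m w * abar l' dd m' w
                          * D l l' n a m c m' w))) ->
  exchangeable P abar D ->
  factorizes P abar D ->
  forall l l' : 'I_L,
    H_blk P abar D l l'
    = kron (Abar_blk P abar l l') (H'_blk P D l l')
      + (maxn (N - 1) 1)%:R^-1 *:
          kron (N%:R *: Abar'_blk P abar l l' - Abar_blk P abar l l')
               (H''_blk P D l l' - H'_blk P D l l').
Proof.
move=> N0 ma mD iaa iD iaaD hex hfact l l'.
apply/matrixP => i j; rewrite !mxE.
case: (vsplit i) => b a; case: (vsplit j) => dd c /=.
have Laa m m' : (fun w => abar l b m w * abar l' dd m' w) \in Lfun P 1.
  by apply/Lfun1_integrable; exact: iaa.
have LD n m m' : D l l' n a m c m' \in Lfun P 1.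
  by apply/Lfun1_integrable; exact: iD.
have LaaD n m m' : (fun w => abar l b m w * abar l' dd m' w
                     * D l l' n a m c m' w) \in Lfun P 1.
  by apply/Lfun1_integrable; exact: iaaD.
pose g n m m' := Ex P (fun w => abar l b m w * abar l' dd m' w
                     * D l l' n a m c m' w).
pose f n m m' := Ex P (D l l' n a m c m').
pose e m m' := Ex P (fun w => abar l b m w * abar l' dd m' w).
have hL : Ex P (fun w => avgN (fun n => \sum_(m < N) \sum_(m' < N)
      abar l b m w * abar l' dd m' w * D l l' n a m c m' w))
    = N%:R^-1 * \sum_n \sum_m \sum_m' g n m m'.
  rewrite Ex_avg; last by move=> n; apply: Lfun_sum => m; apply: Lfun_sum => m'; exact: LaaD.
  congr (_ * _); apply: eq_bigr => n _.
  rewrite Ex_sum; last by move=> m; apply: Lfun_sum => m'; exact: LaaD.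
  by apply: eq_bigr => m _; rewrite Ex_sum.
have hA : Ex P (fun w => avgN (fun n => abar l b n w * abar l' dd n w))
    = N%:R^-1 * \sum_n e n n.
  by rewrite Ex_avg.
have hA' : Ex P (fun w => avgN ((abar l b)^~ w) * avgN ((abar l' dd)^~ w))
    = N%:R^-1 * \sum_m (N%:R^-1 * \sum_m' e m m').
  under eq_fun do rewrite avgN_mul.
  rewrite Ex_avg; last by move=> m; apply: Lfun_scale1; apply: Lfun_sum.
  by congr (_ * _); apply: eq_bigr => m _; rewrite Ex_avg.
have hH1 : Ex P (fun w => avgN (fun n => \sum_(m < N) D l l' n a m c m w))
    = N%:R^-1 * \sum_n \sum_m f n m m.
  rewrite Ex_avg; last by move=> n; apply: Lfun_sum.
  by congr (_ * _); apply: eq_bigr => n _; rewrite Ex_sum.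
have hH2 : Ex P (fun w => avgN (fun n => \sum_(m < N) \sum_(m' < N) D l l' n a m c m' w))
    = N%:R^-1 * \sum_n \sum_m \sum_m' f n m m'.
  rewrite Ex_avg; last by move=> n; apply: Lfun_sum => m; apply: Lfun_sum.
  congr (_ * _); apply: eq_bigr => n _.
  rewrite Ex_sum; last by move=> m; apply: Lfun_sum.
  by apply: eq_bigr => m _; rewrite Ex_sum.
rewrite hL hA hA' hH1 hH2.
apply: alg_main => //.
  move=> pi pi'; have := hfact l l' b dd a c pi pi'.
  rewrite !Ex_avg //.
by move=> s m m'; exact: (@exch_e R d T P L C N abar D ma iaa hex l l' b dd m m' s).
Qed.
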